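(* Let $R$ be a local ring and $M$ an $R$-module. Then $\mathcal M^*$ is dually separated if and only if $M$ is the direct limit of its finitely generated free submodules that are direct summands of $M$, i.e. the family of finitely generated free submodules $L\subseteq M$ that are direct summands of $M$ is upward directed (under inclusion) and its union is $M$.
   Context: An $\mathcal R$-module is a covariant functor $\mathbb M$ from commutative $R$-algebras to abelian groups with each $\mathbb M(S)$ an $S$-module, functorially; morphisms are natural transformations $S$-linear on each $S$. For an $R$-module $M$, $\mathcal M(S)=M\otimes_RS$ and $\mathcal M^*(S)=\operatorname{Hom}_S(M\otimes_RS,S)$; generally $\mathbb M^*(S)=\operatorname{Hom}_{\mathcal S}(\mathbb M_{|S},\mathcal S)$ with $\mathbb M_{|S}$ restriction to $S$-algebras. An $\mathcal R$-module $\mathbb M$ is dually separated if for every commutative $R$-algebra $S$ the map $\mathbb M^*(S)\to\operatorname{Hom}_R(\mathbb M(R),S)$, $w\mapsto w_R$, is injective. *)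

(* Defs.v *)
From HB Require Import structures.
From mathcomp Require Import all_boot all_order all_algebra.
Set Implicit Arguments. Unset Strict Implicit. Unset Printing Implicit Defensive.
Import GRing.Theory.
Local Open Scope ring_scope.

(* A (commutative) local ring: the non-units form an additively closed set
   (equivalently, the non-units form the unique maximal ideal). *)
Definition local_ring (R : comUnitRingType) : Prop :=
  forall x y : R, x \isn't a GRing.unit -> y \isn't a GRing.unit ->
    x + y \isn't a GRing.unit.

Section Duals.
Variables (R : comUnitRingType) (M : lmodType R).

(* An element of Mdual(T) = Hom_T(M (x)_R T, T) is identified with
   an R-linear map w : M -> T, i.e. with [islin f w]. *)
Definition islin (T : comPzRingType) (f : R -> T) (w : M -> T) : Prop :=
  (forall x y : M, w (x + y) = w x + w y) /\
  (forall (r : R) (x : M), w (r *: x) = f r * w x).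

(* Candidate elements of Mdual^dual(S), for the R-algebra (S, fS): a family,
   indexed by the S-algebras (T, g : S -> T), of maps Mdual(T) -> T.  It is
   given as a function on all maps M -> T; only its values on R-linear maps
   (elements of Mdual(T)) matter. *)
Definition dual_family (S : comPzRingType) : Type :=
  forall (T : comPzRingType) (g : {rmorphism S -> T}), (M -> T) -> T.

(* [phi] is a morphism of S-module functors Mdual_{|S} -> S-functor:
   T-linear on each Mdual(T), and natural in S-algebra morphisms. *)
Definition is_dual_nat (S : comPzRingType) (fS : {rmorphism R -> S})
    (phi : dual_family S) : Prop :=
  (forall (T : comPzRingType) (g : {rmorphism S -> T}) (w1 w2 : M -> T),
      islin (g \o fS) w1 -> islin (g \o fS) w2 ->
      phi T g (fun m => w1 m + w2 m) = phi T g w1 + phi T g w2) /\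
  (forall (T : comPzRingType) (g : {rmorphism S -> T}) (t : T) (w : M -> T),
      islin (g \o fS) w ->
      phi T g (fun m => t * w m) = t * phi T g w) /\
  (forall (T T' : comPzRingType) (g : {rmorphism S -> T})
          (g' : {rmorphism S -> T'}) (h : {rmorphism T -> T'}) (w : M -> T),
      (forall s, h (g s) = g' s) ->
      islin (g \o fS) w ->
      phi T' g' (h \o w) = h (phi T g w)).

Definition dual_nat_eq (S : comPzRingType) (fS : {rmorphism R -> S})
    (phi psi : dual_family S) : Prop :=
  forall (T : comPzRingType) (g : {rmorphism S -> T}) (w : M -> T),
    islin (g \o fS) w -> phi T g w = psi T g w.

(* The functor Mdual is dually separated: for every commutative R-algebra S,
   the map Mdual^dual(S) -> Hom_R(Mdual(R), S), w |-> w_R, is injective; here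
   w_R(u) = w_S(u (x) 1) and u (x) 1 corresponds to fS \o u. *)
Definition dual_dually_separated : Prop :=
  forall (S : comPzRingType) (fS : {rmorphism R -> S}) (phi psi : dual_family S),
    is_dual_nat fS phi -> is_dual_nat fS psi ->
    (forall u : M -> R, islin idfun u ->
       phi S idfun (fS \o u) = psi S idfun (fS \o u)) ->
    dual_nat_eq fS phi psi.

Definition submodule (L : M -> Prop) : Prop :=
  L 0 /\ forall (a : R) (u v : M), L u -> L v -> L (a *: u + v).

Definition fg_free_submodule (L : M -> Prop) : Prop :=
  submodule L /\
  exists (n : nat) (e : 'I_n -> M),
    (forall x, L x <-> exists c : 'I_n -> R, x = \sum_(i < n) c i *: e i) /\
    (forall c : 'I_n -> R, \sum_(i < n) c i *: e i = 0 -> forall i, c i = 0).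

Definition direct_summand (L : M -> Prop) : Prop :=
  submodule L /\
  exists L' : M -> Prop, submodule L' /\
    (forall x, L x -> L' x -> x = 0) /\
    (forall x, exists y z, L y /\ L' z /\ x = y + z).

Definition fgfree_summand (L : M -> Prop) : Prop :=
  fg_free_submodule L /\ direct_summand L.

Definition dirlim_fgfree_summands : Prop :=
  (forall L1 L2, fgfree_summand L1 -> fgfree_summand L2 ->
     exists L3, fgfree_summand L3 /\
       (forall x, L1 x -> L3 x) /\ (forall x, L2 x -> L3 x)) /\
  (forall x : M, exists L, fgfree_summand L /\ L x).

End Duals.

(* Main.v *)
Require Import Defs.
From HB Require Import structures.
From mathcomp Require Import all_boot all_order all_algebra.
From mathcomp Require Import boolp fingroup perm.
Set Implicit Arguments. Unset Strict Implicit. Unset Printing Implicit Defensive.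
Import GRing.Theory.
Local Open Scope ring_scope.

Section ModLemmas.
Variables (R : comUnitRingType) (M : lmodType R).

Definition lin (u : M -> R) := islin (M:=M) (T:=R) idfun u.

Lemma lin_add u x y : lin u -> u (x + y) = u x + u y.
Proof. by case. Qed.
Lemma lin_scale u r x : lin u -> u (r *: x) = r * u x.
Proof. by case=> _ ->. Qed.
Lemma lin0 u : lin u -> u 0 = 0.
Proof. by move=> hu; have := lin_scale 0 0 hu; rewrite scale0r mul0r. Qed.
Lemma lin_opp u x : lin u -> u (- x) = - u x.
Proof. by move=> hu; rewrite -scaleN1r lin_scale // mulN1r. Qed.
Lemma lin_sub u x y : lin u -> u (x - y) = u x - u y.
Proof. by move=> hu; rewrite lin_add // lin_opp. Qed.
Lemma lin_sum u n (c : 'I_n -> R) (y : 'I_n -> M) : lin u ->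
  u (\sum_(i < n) c i *: y i) = \sum_(i < n) c i * u (y i).
Proof.
move=> hu; elim: n c y => [|n IH] c y; first by rewrite !big_ord0 lin0.
by rewrite !big_ord_recr /= lin_add // lin_scale // IH.
Qed.
Lemma linD u u' : lin u -> lin u' -> lin (fun m => u m + u' m).
Proof.
move=> hu hu'; split=> [x y|r x]; first by rewrite !lin_add // addrACA.
by rewrite !lin_scale // mulrDr.
Qed.
Lemma linZ a u : lin u -> lin (fun m => a * u m).
Proof.
move=> hu; split=> [x y|r x]; first by rewrite lin_add // mulrDr.
by rewrite lin_scale //= mulrCA.
Qed.
Lemma linN u : lin u -> lin (fun m => - u m).
Proof.
move=> hu; split=> [x y|r x]; first by rewrite lin_add // opprD.
by rewrite lin_scale //= mulrN.
Qed.

Lemma sub_add (L : M -> Prop) u v : submodule L -> L u -> L v -> L (u + v).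
Proof. by case=> _ H Lu Lv; have := H 1 u v Lu Lv; rewrite scale1r. Qed.
Lemma sub_scale (L : M -> Prop) a u : submodule L -> L u -> L (a *: u).
Proof. by case=> H0 H Lu; have := H a u 0 Lu H0; rewrite addr0. Qed.
Lemma sub_sum (L : M -> Prop) n (c : 'I_n -> R) (y : 'I_n -> M) : submodule L ->
  (forall i, L (y i)) -> L (\sum_(i < n) c i *: y i).
Proof.
move=> hL hy; elim: n c y hy => [|n IH] c y hy; first by rewrite big_ord0; case: hL.
rewrite big_ord_recr /=; apply: sub_add => //; last exact: sub_scale.
by apply: IH => i.
Qed.

Definition spn n (e : 'I_n -> M) (x : M) := exists c : 'I_n -> R, x = \sum_(i < n) c i *: e i.

Lemma spn_sub n (e : 'I_n -> M) : submodule (spn e).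
Proof.
split; first by exists (fun _ => 0); rewrite big1 // => i _; rewrite scale0r.
move=> a u v [c ->] [d ->]; exists (fun i => a * c i + d i).
rewrite scaler_sumr -big_split /=; apply: eq_bigr => i _.
by rewrite scalerDl scalerA.
Qed.
Lemma spn_e n (e : 'I_n -> M) i : spn e (e i).
Proof.
exists (fun j => (i == j)%:R); rewrite (bigD1 i) //= eqxx scale1r big1 ?addr0 //.
by move=> j /negbTE; rewrite eq_sym => ->; rewrite scale0r.
Qed.
Lemma spn_min n (e : 'I_n -> M) (L : M -> Prop) x : submodule L -> (forall i, L (e i)) -> spn e x -> L x.
Proof. by move=> hL he [c ->]; apply: sub_sum. Qed.

End ModLemmas.

Section Biortho.
Variables (R : comUnitRingType) (M : lmodType R).

Definition Pfree n (y : 'I_n -> M) := forall c : 'I_n -> R,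
  (exists j, c j \is a GRing.unit) ->
  exists u, lin u /\ u (\sum_(i < n) c i *: y i) \is a GRing.unit.

Lemma biortho n (y : 'I_n -> M) : Pfree y ->
  exists (v : 'I_n -> M -> R) (e : 'I_n -> M),
    (forall i, lin (v i)) /\ (forall i j, v i (e j) = (i == j)%:R) /\
    (forall i, spn e (y i)) /\ (forall i, spn y (e i)).
Proof.
elim: n y => [|n IH] y hP.
  by exists (fun _ _ => 0), (fun _ => 0); split; [|split; [|split]]; case.
have [u [lu uy0]] : exists u, lin u /\ u (y ord0) \is a GRing.unit.
  have [|u [lu hu]] := hP (fun i => (i == ord0)%:R); first by exists ord0; rewrite eqxx unitr1.
  exists u; split => //; move: hu; rewrite (bigD1 ord0) //= ?eqxx ?scale1r big1 ?addr0 //.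
  by move=> i /negbTE ->; rewrite scale0r.
pose v m := (u (y ord0))^-1 * u m.
have lv : lin v by apply: linZ.
have vy0 : v (y ord0) = 1 by rewrite /v mulVr.
pose y' (i : 'I_n) := y (lift ord0 i) - v (y (lift ord0 i)) *: y ord0.
have vy' i : v (y' i) = 0.
  by rewrite /y' lin_sub // lin_scale // vy0 mulr1 subrr.
have hP' : Pfree y'.
  move=> c [j cj]; pose ct (i : 'I_n.+1) := if unlift ord0 i is Some i' then c i'
           else - \sum_(k < n) c k * v (y (lift ord0 k)).
  have [|u' [lu' hu']] := hP ct; first by exists (lift ord0 j); rewrite /ct liftK.
  exists u'; split => //; move: hu'; congr (u' _ \is a _).
  rewrite big_ord_recl /ct unlift_none /=.
  rewrite (eq_bigr (fun i => c i *: y (lift ord0 i))); last by move=> i _; rewrite liftK.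
  rewrite /y'; under [RHS]eq_bigr do rewrite scalerBr scalerA.
  rewrite sumrB scaleNr -scaler_suml addrC; congr (_ - _).
have [v' [e' [lv' [ve' [sp' sp'']]]]] := IH y' hP'.
have ve'0 j : v (e' j) = 0.
  have [c ->] := sp'' j; rewrite lin_sum //; rewrite big1 // => i _.
  by rewrite vy' mulr0.
exists (fun i m => if unlift ord0 i is Some i' then v' i' m - v' i' (y ord0) * v m else v m).
exists (fun i => if unlift ord0 i is Some i' then e' i' else y ord0).
split; [|split; [|split]].
- move=> i; case: (unlift ord0 i) => [i'|] //; apply: linD => //; last apply: linN.
  exact: linZ.
- move=> i j; case: (unliftP ord0 i) => [i'|] -> ; case: (unliftP ord0 j) => [j'|] ->.
  + by rewrite ve' ve'0 mulr0 subr0 (inj_eq (@lift_inj _ ord0)).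
  + by rewrite vy0 mulr1 subrr eq_sym (negbTE (neq_lift _ _)).
  + by rewrite ve'0 (negbTE (neq_lift _ _)).
  + by rewrite vy0 eqxx.
- pose e := (fun i : 'I_n.+1 => if unlift ord0 i is Some i' then e' i' else y ord0).
  have spe : submodule (spn e) by apply: spn_sub.
  have y0e : spn e (y ord0) by have := spn_e e ord0; rewrite /e unlift_none.
  have e'e x : spn e' x -> spn e x.
    apply: spn_min => // i; have := spn_e e (lift ord0 i); by rewrite /e liftK.
  move=> i; case: (unliftP ord0 i) => [i'|] -> //.
  have -> : y (lift ord0 i') = y' i' + v (y (lift ord0 i')) *: y ord0 by rewrite /y' subrK.
  by apply: sub_add => //; [apply: e'e | apply: sub_scale].
- have spy : submodule (spn y) by apply: spn_sub.
  have y'y x : spn y' x -> spn y x.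
    apply: spn_min => // i; rewrite /y'; apply: sub_add => //; first exact: spn_e.
    by rewrite -scaleN1r; apply: sub_scale => //; apply: sub_scale => //; apply: spn_e.
  move=> i /=; case: (unliftP ord0 i) => [i'|] _; last exact: spn_e.
  by apply: y'y.
Qed.

End Biortho.

Section Reduce.
Variables (R : comUnitRingType) (M : lmodType R).

Lemma lin_coord n (v : 'I_n -> M -> R) (e : 'I_n -> M) (c : 'I_n -> R) j :
  (forall i, lin (v i)) -> (forall i j, v i (e j) = (i == j)%:R) ->
  v j (\sum_(i < n) c i *: e i) = c j.
Proof.
move=> lv ve; rewrite lin_sum // (bigD1 j) //= ve eqxx mulr1 big1 ?addr0 //.
by move=> i /negbTE; rewrite ve eq_sym => ->; rewrite mulr0.
Qed.

Lemma biortho_fgfree n (v : 'I_n -> M -> R) (e : 'I_n -> M) :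
  (forall i, lin (v i)) -> (forall i j, v i (e j) = (i == j)%:R) ->
  fgfree_summand (spn e).
Proof.
move=> lv ve; have hs := spn_sub e.
split; split => //.
  exists n, e; split => // c hc i; have := lin_coord c i lv ve.
  by rewrite hc lin0.
exists (fun x => forall j, v j x = 0); split; [split|split].
- by move=> j; rewrite lin0.
- by move=> a u w hu hw j; rewrite lin_add // lin_scale // hu hw mulr0 addr0.
- move=> x [c ->] h; rewrite big1 // => i _.
  by have := h i; rewrite lin_coord // => ->; rewrite scale0r.
- move=> x; exists (\sum_(i < n) v i x *: e i), (x - \sum_(i < n) v i x *: e i).
  split; first by exists (fun i => v i x).
  split; last by rewrite addrC subrK.
  by move=> j; rewrite lin_sub // lin_coord // subrr.
Qed.

Lemma Pfree_or n (y : 'I_n -> M) : Pfree y \/ exists c : 'I_n -> R,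
  (exists j, c j \is a GRing.unit) /\
  forall u, lin u -> u (\sum_(i < n) c i *: y i) \isn't a GRing.unit.
Proof.
case: (pselect (exists c : 'I_n -> R, (exists j, c j \is a GRing.unit) /\
  forall u, lin u -> u (\sum_(i < n) c i *: y i) \isn't a GRing.unit)) => H; [by right|left].
move=> c hc; case: (pselect (exists u, lin u /\ u (\sum_(i < n) c i *: y i) \is a GRing.unit)) => // Hu.
exfalso; apply: H; exists c; split => // u lu; apply/negP => hun; apply: Hu; by exists u.
Qed.

Hypothesis loc : local_ring R.

Lemma unit_1sub (a : R) : a \isn't a GRing.unit -> 1 - a \is a GRing.unit.
Proof.
move=> ha; apply/negPn/negP => h; have := loc h ha; by rewrite subrK unitr1.
Qed.

Lemma reduce_head n (w : 'I_n.+1 -> M -> R) (y : 'I_n.+1 -> M) (c : 'I_n.+1 -> R) :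
  (forall j, lin (w j)) -> c ord0 \is a GRing.unit ->
  (forall u, lin u -> u (\sum_(i < n.+1) c i *: y i) \isn't a GRing.unit) ->
  let z := \sum_(i < n.+1) c i *: y i in
  let om m := (c ord0)^-1 * w ord0 m in
  forall x, x = \sum_(t < n.+1) w t x *: y t ->
  x = \sum_(t < n) (w (lift ord0 t) x - (c ord0)^-1 * c (lift ord0 t) * w ord0 x) *:
        (y (lift ord0 t) + ((1 - om z)^-1 * om (y (lift ord0 t))) *: z).
Proof.
move=> lw c0u hz z om x hx.
have lom : lin om by apply: linZ.
have omz : 1 - om z \is a GRing.unit by apply: unit_1sub; apply: hz.
set b := fun t : 'I_n => w (lift ord0 t) x - (c ord0)^-1 * c (lift ord0 t) * w ord0 x.
have step1 : x = om x *: z + \sum_(t < n) b t *: y (lift ord0 t).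
  rewrite {1}hx big_ord_recl /z big_ord_recl scalerDr scalerA /om.
  rewrite [_ * _ * c ord0]mulrAC mulVr // mul1r -addrA; congr (_ + _).
  rewrite scaler_sumr -big_split /=; apply: eq_bigr => t _.
  by rewrite scalerA /b scalerBl [_ * _ * c _]mulrAC addrC subrK.
have step2 : om x = (1 - om z)^-1 * \sum_(t < n) b t * om (y (lift ord0 t)).
  have := congr1 om step1; rewrite lin_add // lin_scale // lin_sum // => h.
  apply: (@mulrI _ (1 - om z)) => //; rewrite mulrA mulrV // mul1r.
  by rewrite mulrBl mul1r {1}h [om x * om z]mulrC [om z * om x + _]addrC addrK.
rewrite {1}step1; under [RHS]eq_bigr do rewrite scalerDr scalerA.
rewrite big_split /= addrC; congr (_ + _).
rewrite -scaler_suml step2 mulr_sumr; congr (_ *: _); apply: eq_bigr => t _.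
by rewrite mulrCA.
Qed.

Lemma reduce k (X : 'I_k -> M) n : forall (w : 'I_n -> M -> R) (y : 'I_n -> M),
  (forall j, lin (w j)) -> (forall i, X i = \sum_(j < n) w j (X i) *: y j) ->
  exists n' (y' : 'I_n' -> M), Pfree y' /\ forall i, spn y' (X i).
Proof.
elim: n => [|n IH] w y lw hX.
  exists 0, y; split; last by move=> i; exists (fun j => w j (X i)).
  by move=> c [[]].
case: (Pfree_or y) => [hP|[c [[j cj] hz]]].
  by exists n.+1, y; split => // i; exists (fun t => w t (X i)).
pose s := tperm ord0 j.
pose w1 t := w (s t); pose y1 t := y (s t); pose c1 t := c (s t).
have hs (F : 'I_n.+1 -> M) : \sum_(t < n.+1) F (s t) = \sum_(t < n.+1) F t.
  by rewrite [RHS](reindex_inj (@perm_inj _ s)).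
have lw1 t : lin (w1 t) by apply: lw.
have c1u : c1 ord0 \is a GRing.unit by rewrite /c1 /s tpermL.
have hz1 u : lin u -> u (\sum_(i < n.+1) c1 i *: y1 i) \isn't a GRing.unit.
  by move=> lu; rewrite (hs (fun i => c i *: y i)); apply: hz.
have hX1 i : X i = \sum_(t < n.+1) w1 t (X i) *: y1 t.
  by rewrite (hs (fun t => w t (X i) *: y t)); apply: hX.
pose z := \sum_(i < n.+1) c1 i *: y1 i.
pose om m := (c1 ord0)^-1 * w1 ord0 m.
apply: (IH (fun t m => w1 (lift ord0 t) m - (c1 ord0)^-1 * c1 (lift ord0 t) * w1 ord0 m)
           (fun t => y1 (lift ord0 t) + ((1 - om z)^-1 * om (y1 (lift ord0 t))) *: z)).
  move=> t; apply: linD => //; apply: linN; exact: linZ.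
by move=> i; apply: (reduce_head lw1 c1u hz1).
Qed.

End Reduce.

Record idl (B : comPzRingType) := Idl {
  ipred :> B -> Prop;
  ipred0 : ipred 0;
  ipredB : forall a b, ipred a -> ipred b -> ipred (a - b);
  ipredM : forall a b, ipred b -> ipred (a * b) }.

Section Quot.
Variables (B : comPzRingType) (I : idl B).
Let I0 := ipred0 I.
Let IB := @ipredB _ I.
Let IM := @ipredM _ I.

Lemma IN a : I a -> I (- a). Proof. by move=> h; rewrite -sub0r; apply: IB. Qed.
Lemma ID a b : I a -> I b -> I (a + b).
Proof. by move=> ha hb; rewrite -[b]opprK; apply: IB => //; apply: IN. Qed.

Definition qcls (b : B) : B -> Prop := fun b' => I (b' - b).
Record quo := Quo { qset : B -> Prop; qprop : exists b, qset = qcls b }.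
HB.instance Definition _ := gen_eqMixin quo.
HB.instance Definition _ := gen_choiceMixin quo.

Lemma quo_eq (p q : quo) : qset p = qset q -> p = q.
Proof.
case: p q => [A hA] [C hC] /= e; subst C; congr Quo; exact: Prop_irrelevance.
Qed.

Definition pi (b : B) : quo := @Quo (qcls b) (ex_intro _ b erefl).
Definition rep (q : quo) : B := projT1 (cid (qprop q)).

Lemma repK q : pi (rep q) = q.
Proof. apply: quo_eq => /=; rewrite /rep; case: (cid _) => b /= ->; done. Qed.

Lemma pi_eq a b : pi a = pi b <-> I (a - b).
Proof.
split=> [e|h].
  have : qcls a a by rewrite /qcls subrr.
  by have -> : qcls a = qcls b by move: (congr1 qset e).
apply: quo_eq => /=; apply: funext => x; apply: propext; rewrite /qcls; split => hx.
  by have := ID hx h; rewrite addrA subrK.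
by have := IB hx h; rewrite opprB addrA subrK.
Qed.

Lemma rep_pi b : I (rep (pi b) - b).
Proof. by apply/pi_eq; rewrite repK. Qed.

Definition qadd p q := pi (rep p + rep q).
Definition qopp p := pi (- rep p).
Definition qmul p q := pi (rep p * rep q).

Lemma pi_add a b : qadd (pi a) (pi b) = pi (a + b).
Proof.
apply/pi_eq; have := ID (rep_pi a) (rep_pi b).
by rewrite opprD addrACA.
Qed.
Lemma pi_opp a : qopp (pi a) = pi (- a).
Proof. by apply/pi_eq; have := IN (rep_pi a); rewrite opprB opprK addrC. Qed.
Lemma pi_mul a b : qmul (pi a) (pi b) = pi (a * b).
Proof.
apply/pi_eq; have := ID (IM (rep (pi a)) (rep_pi b)) (IM b (rep_pi a)).
by rewrite mulrBr mulrBr [b * _]mulrC [b * a]mulrC addrA subrK.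
Qed.

Lemma qaddA : associative qadd.
Proof. by move=> x y z; rewrite -[x]repK -[y]repK -[z]repK !pi_add addrA. Qed.
Lemma qaddC : commutative qadd.
Proof. by move=> x y; rewrite -[x]repK -[y]repK !pi_add addrC. Qed.
Lemma qadd0 : left_id (pi 0) qadd.
Proof. by move=> x; rewrite -[x]repK pi_add add0r. Qed.
Lemma qaddN : left_inverse (pi 0) qopp qadd.
Proof. by move=> x; rewrite -[x]repK pi_opp pi_add addNr. Qed.
HB.instance Definition _ := GRing.isZmodule.Build quo qaddA qaddC qadd0 qaddN.
Lemma qmulA : associative qmul.
Proof. by move=> x y z; rewrite -[x]repK -[y]repK -[z]repK !pi_mul mulrA. Qed.
Lemma qmulC : commutative qmul.
Proof. by move=> x y; rewrite -[x]repK -[y]repK !pi_mul mulrC. Qed.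
Lemma qmul1 : left_id (pi 1) qmul.
Proof. by move=> x; rewrite -[x]repK pi_mul mul1r. Qed.
Lemma qmulD : left_distributive qmul qadd.
Proof. by move=> x y z; rewrite -[x]repK -[y]repK -[z]repK !(pi_mul, pi_add) mulrDl. Qed.
HB.instance Definition _ := GRing.Zmodule_isComPzRing.Build quo qmulA qmulC qmul1 qmulD.

Lemma pi_is_zmod : zmod_morphism pi.
Proof. move=> a b; transitivity (qadd (pi a) (qopp (pi b))); last by []. by rewrite pi_opp pi_add. Qed.
HB.instance Definition _ := GRing.isZmodMorphism.Build B quo pi pi_is_zmod.
Lemma pi_is_mul : multiplicative pi.
Proof. split=> // a b; transitivity (qmul (pi a) (pi b)); last by []. by rewrite pi_mul. Qed.
HB.instance Definition _ := GRing.isMultiplicative.Build B quo pi pi_is_mul.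

Lemma pi0 b : pi b = 0 <-> I b.
Proof. by have := pi_eq b 0; rewrite subr0. Qed.

End Quot.

Section Sq.
Variables (A : comPzRingType) (N : lmodType A).
Record sq := Sq { sq1 : A; sq2 : N }.
HB.instance Definition _ := gen_eqMixin sq.
HB.instance Definition _ := gen_choiceMixin sq.
Definition sq0 := Sq 0 0.
Definition sqadd a b := Sq (sq1 a + sq1 b) (sq2 a + sq2 b).
Definition sqopp a := Sq (- sq1 a) (- sq2 a).
Lemma sqaddA : associative sqadd. Proof. by case=> ??[??][??]; rewrite /sqadd /= !addrA. Qed.
Lemma sqaddC : commutative sqadd. Proof. by case=> ??[??]; rewrite /sqadd /=; congr Sq; rewrite addrC. Qed.
Lemma sqadd0 : left_id sq0 sqadd. Proof. by case=> ??; rewrite /sqadd /= !add0r. Qed.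
Lemma sqaddN : left_inverse sq0 sqopp sqadd. Proof. by case=> ??; rewrite /sqadd /= !addNr. Qed.
HB.instance Definition _ := GRing.isZmodule.Build sq sqaddA sqaddC sqadd0 sqaddN.
Definition sqmul a b := Sq (sq1 a * sq1 b) (sq1 a *: sq2 b + sq1 b *: sq2 a).
Definition sqone := Sq 1 0.
Lemma sqmulA : associative sqmul. Proof.
case=> a m [b n] [c p]; rewrite /sqmul /=; congr Sq; first by rewrite mulrA.
rewrite !scalerDr ?scalerDl !scalerA !addrA. by rewrite [c * a]mulrC [c * b]mulrC. Qed.
Lemma sqmulC : commutative sqmul. Proof. by case=> a m [b n]; rewrite /sqmul /= mulrC addrC. Qed.
Lemma sqmul1 : left_id sqone sqmul. Proof. by case=> a m; rewrite /sqmul /= mul1r scale1r scaler0 addr0. Qed.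
Lemma sqmulD : left_distributive sqmul sqadd. Proof.
case=> a m [b n] [c p]; rewrite /sqmul /sqadd /=; congr Sq; first by rewrite mulrDl.
rewrite scalerDl scalerDr -!addrA; congr (_ + _); rewrite [RHS]addrC -!addrA; congr (_ + _); by rewrite addrC. Qed.
HB.instance Definition _ := GRing.Zmodule_isComPzRing.Build sq sqmulA sqmulC sqmul1 sqmulD.

Lemma sq1_zmod : zmod_morphism sq1. Proof. by []. Qed.
HB.instance Definition _ := GRing.isZmodMorphism.Build sq A sq1 sq1_zmod.
Lemma sq2_zmod : zmod_morphism sq2. Proof. by []. Qed.
HB.instance Definition _ := GRing.isZmodMorphism.Build sq N sq2 sq2_zmod.

Definition sqA (a : A) : sq := Sq a 0.
Lemma sqA_zmod : zmod_morphism sqA.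
Proof. by move=> a b; rewrite /sqA; congr Sq => /=; rewrite subr0. Qed.
HB.instance Definition _ := GRing.isZmodMorphism.Build A sq sqA sqA_zmod.
Lemma sqA_mul : multiplicative sqA.
Proof. split=> // a b; rewrite /sqA; congr Sq => /=; by rewrite !scaler0 addr0. Qed.
HB.instance Definition _ := GRing.isMultiplicative.Build A sq sqA sqA_mul.

Definition sqN (n : N) : sq := Sq 0 n.
Lemma sqN_zmod : zmod_morphism sqN.
Proof. by move=> a b; rewrite /sqN; congr Sq => /=; rewrite subr0. Qed.
HB.instance Definition _ := GRing.isZmodMorphism.Build N sq sqN sqN_zmod.

Lemma sq_mulE a b : a * b = Sq (sq1 a * sq1 b) (sq1 a *: sq2 b + sq1 b *: sq2 a).
Proof. by []. Qed.
Lemma sq_addE a b : a + b = Sq (sq1 a + sq1 b) (sq2 a + sq2 b).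
Proof. by []. Qed.
Lemma sq_eta a : a = Sq (sq1 a) (sq2 a). Proof. by case: a. Qed.
End Sq.


Section NN.
Variables (R : comUnitRingType) (M : lmodType R) (k : nat).
Definition A1 := sq ({ffun 'I_k -> R^o} : lmodType R).
Record NN := MkNN { nm : M; np : {ffun 'I_k -> M} }.
HB.instance Definition _ := gen_eqMixin NN.
HB.instance Definition _ := gen_choiceMixin NN.
Definition nn0 := MkNN 0 0.
Definition nnadd a b := MkNN (nm a + nm b) (np a + np b).
Definition nnopp a := MkNN (- nm a) (- np a).
Lemma nnaddA : associative nnadd. Proof. by case=> ??[??][??]; rewrite /nnadd /= !addrA. Qed.
Lemma nnaddC : commutative nnadd. Proof. by case=> ??[??]; rewrite /nnadd /=; congr MkNN; rewrite addrC. Qed.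
Lemma nnadd0 : left_id nn0 nnadd. Proof. by case=> ??; rewrite /nnadd /= !add0r. Qed.
Lemma nnaddN : left_inverse nn0 nnopp nnadd. Proof. by case=> ??; rewrite /nnadd /= !addNr. Qed.
HB.instance Definition _ := GRing.isZmodule.Build NN nnaddA nnaddC nnadd0 nnaddN.
Definition nnscale (a : A1) (n : NN) : NN :=
  MkNN (sq1 a *: nm n) [ffun i => sq1 a *: np n i + sq2 a i *: nm n].
Lemma nnscaleA a b v : nnscale a (nnscale b v) = nnscale (a * b) v.
Proof.
case: a b v => [a c] [b d] [m p]; rewrite /nnscale /=; congr MkNN; first by rewrite scalerA.
apply/ffunP => i; rewrite !ffunE /= scalerDr !scalerA scalerDl -addrA [c i * b]mulrC; done.
Qed.
Lemma nnscale1 : left_id 1 nnscale.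
Proof.
case=> m p; rewrite /nnscale /=; congr MkNN; first by rewrite scale1r.
by apply/ffunP => i; rewrite !ffunE scale1r scale0r addr0.
Qed.
Lemma nnscaleDr : right_distributive nnscale +%R.
Proof.
case=> a c [m p] [m' p']; rewrite /nnscale /=; congr MkNN; first by rewrite scalerDr.
apply/ffunP => i; rewrite !ffunE /= ?ffunE !scalerDr -!addrA; congr (_ + _).
by rewrite addrCA addrA.
Qed.
Lemma nnscaleDl v : {morph nnscale^~ v : a b / a + b}.
Proof.
case: v => m p [a c] [b d]; rewrite /nnscale /=; congr MkNN; first by rewrite scalerDl.
apply/ffunP => i; rewrite !ffunE /= ?ffunE !scalerDl -!addrA; congr (_ + _).
by rewrite addrCA addrA.
Qed.
HB.instance Definition _ := GRing.Zmodule_isLmodule.Build A1 NN nnscaleA nnscale1 nnscaleDr nnscaleDl.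
Definition BB := sq NN.
End NN.

Section Fam.
Variables (R : comUnitRingType) (M : lmodType R) (k : nat) (X : 'I_k -> M).

Definition Jw (p : 'I_k -> M) := exists n (u : 'I_n -> M -> R) (y : 'I_n -> M),
  (forall j, lin (u j)) /\ forall i, p i = \sum_(j < n) u j (X i) *: y j.

Lemma Jw0 : Jw (fun _ => 0).
Proof. exists 0, (fun _ _ => 0), (fun _ => 0); split; first by case.
by move=> i; rewrite big_ord0. Qed.
Lemma Jw_scale r p : Jw p -> Jw (fun i => r *: p i).
Proof.
case=> n [u [y [lu hp]]]; exists n, (fun j m => r * u j m), y; split.
  by move=> j; apply: linZ.
by move=> i; rewrite hp scaler_sumr; apply: eq_bigr => j _; rewrite scalerA.
Qed.

Lemma Jw_single u m : lin u -> Jw (fun i => u (X i) *: m).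
Proof.
move=> lu; exists 1, (fun _ => u), (fun _ => m); split => // i.
by rewrite big_ord1.
Qed.

Lemma Jw_add p q : Jw p -> Jw q -> Jw (fun i => p i + q i).
Proof.
case=> n1 [u1 [y1 [lu1 hp]]] [n2 [u2 [y2 [lu2 hq]]]].
exists (n1 + n2), (fun j => match split j with inl a => u1 a | inr b => u2 b end),
  (fun j => match split j with inl a => y1 a | inr b => y2 b end); split.
  by move=> j; case: (split j).
move=> i; rewrite big_split_ord hp hq; congr (_ + _); apply: eq_bigr => j _.
  by rewrite (unsplitK (inl j)).
by rewrite (unsplitK (inr j)).
Qed.

Lemma Jw_opp p : Jw p -> Jw (fun i => - p i).
Proof. by move=> h; have := Jw_scale (-1) h; under eq_fun do rewrite scaleN1r. Qed.

Definition Ib (b : BB M k) : Prop :=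
  sq1 (sq1 b) = 0 /\ nm (sq2 b) = 0 /\
  (exists u, lin u /\ sq2 (sq1 b) = [ffun i => u (X i)]) /\
  Jw (fun i => np (sq2 b) i).

Lemma Ib0 : Ib 0.
Proof.
split=> //; split=> //; split.
  exists (fun _ => 0); split; first by split => *; rewrite ?addr0 ?mulr0.
  by apply/ffunP => i; rewrite !ffunE.
have -> : (fun i => np (sq2 (0 : BB M k)) i) = (fun _ => 0).
  by apply: funext => i; rewrite /= ffunE.
exact: Jw0.
Qed.

Lemma IbB a b : Ib a -> Ib b -> Ib (a - b).
Proof.
case=> a1 [a3 [[u [lu a2]] a4]] [b1 [b3 [[v [lv b2]] b4]]].
split; first by rewrite /= a1 b1 subrr.
split; first by rewrite /= a3 b3 subrr.
split.
  exists (fun m => u m - v m); split; first by apply: linD => //; apply: linN.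
  by apply/ffunP => i; rewrite /= a2 b2 !ffunE.
have := Jw_add a4 (Jw_opp b4); congr Jw; apply: funext => i.
by rewrite /= !ffunE.
Qed.

Lemma IbM a b : Ib b -> Ib (a * b).
Proof.
case=> b1 [b3 [[v [lv b2]] b4]].
case: a => [[r c] [m p]]; case: b b1 b3 b2 b4 => [[r' c'] [m' p']] /= b1 b3 b2 b4.
subst r' m'.
split; first by rewrite /= mulr0.
split; first by rewrite /= scaler0 scale0r addr0.
split.
  exists (fun x => r * v x); split; first exact: linZ.
  by apply/ffunP => i; rewrite /= b2 !ffunE /= ?ffunE scale0r addr0.
rewrite /=.
have := Jw_add (Jw_scale r b4) (Jw_single m lv); congr Jw; apply: funext => i.
by rewrite !ffunE scaler0 addr0 scale0r add0r b2 ffunE.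
Qed.




Definition Ibi : idl (BB M k) := Idl Ib0 IbB IbM.
End Fam.

Section Nat.
Variables (R : comUnitRingType) (M : lmodType R) (S : comPzRingType) (fS : {rmorphism R -> S}).

Definition phiX k (s : 'I_k -> S) (X : 'I_k -> M) : dual_family M S :=
  fun T g w => \sum_(i < k) g (s i) * w (X i).

Lemma phiX_nat k s X : is_dual_nat fS (@phiX k s X).
Proof.
split; [|split].
- by move=> T g w1 w2 _ _; rewrite /phiX -big_split; apply: eq_bigr => i _; rewrite mulrDr.
- by move=> T g t w _; rewrite /phiX mulr_sumr; apply: eq_bigr => i _; rewrite mulrCA.
- move=> T T' g g' h w hg _; rewrite /phiX rmorph_sum; apply: eq_bigr => i _.
  by rewrite rmorphM hg.
Qed.

Lemma zero_nat : is_dual_nat (M:=M) fS (fun _ _ _ => 0).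
Proof.
split; [|split]; first by move=> *; rewrite addr0.
  by move=> *; rewrite mulr0.
by move=> *; rewrite rmorph0.
Qed.
End Nat.

Section StepA.
Variables (R : comUnitRingType) (M : lmodType R) (k : nat) (X : 'I_k -> M).
Let V := ({ffun 'I_k -> R^o} : lmodType R).
Let I := Ibi X.
Let S := quo I.
Definition fSA : {rmorphism R -> S} := pi I \o sqA (NN M k) \o sqA V.
Definition sA (i : 'I_k) : S := pi I (Sq (Sq 0 [ffun j => (i == j)%:R]) 0).
Definition wA (m : M) : S := pi I (Sq 0 (MkNN m 0)).

Definition nnp (p : {ffun 'I_k -> M}) : NN M k := MkNN 0 p.
Lemma nnp_zmod : zmod_morphism nnp.
Proof. by move=> a b; rewrite /nnp; congr MkNN; rewrite /= subr0. Qed.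
HB.instance Definition _ := GRing.isZmodMorphism.Build _ _ nnp nnp_zmod.

Lemma sumdelta (F : 'I_k -> R) : \sum_(i < k) (F i *: [ffun j => (i == j)%:R] : V) = [ffun j => F j].
Proof.
apply/ffunP => j; rewrite sum_ffunE !ffunE (bigD1 j) //= !ffunE eqxx big1 ?addr0.
  by rewrite /GRing.scale /= mulr1.
by move=> i /negbTE hi; rewrite !ffunE hi /GRing.scale /= mulr0.
Qed.

Lemma sumdeltaM (F : 'I_k -> M) :
  \sum_(i < k) [ffun j => (i == j)%:R *: F i] = [ffun j => F j].
Proof.
apply/ffunP => j; rewrite sum_ffunE !ffunE (bigD1 j) //= !ffunE eqxx scale1r big1 ?addr0 //.
by move=> i /negbTE hi; rewrite !ffunE hi scale0r.
Qed.

Lemma stepA (sep : dual_dually_separated M) : Jw X X.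
Proof.
have heq : dual_nat_eq fSA (phiX sA X) (fun _ _ _ => 0).
  apply: sep; [exact: phiX_nat | exact: zero_nat |].
  move=> u lu; rewrite /phiX /=.
  transitivity (pi I (\sum_(i < k) sqA (NN M k) (@sqN _ V (u (X i) *: [ffun j => (i == j)%:R])))).
    rewrite rmorph_sum; apply: eq_bigr => i _; rewrite /sA /fSA /= -rmorphM; congr (pi I _).
    rewrite sq_mulE /=; congr Sq.
      by rewrite /sqA /sqN sq_mulE /= mul0r ?scaler0 ?scale0r add0r.
    by rewrite !scaler0 addr0.
  apply/pi0; rewrite -!raddf_sum sumdelta.
  split=> //; split=> //; split; first by exists u; split.
  have -> : (fun i => np (sq2 (sqA (NN M k) (@sqN _ V [ffun j => u (X j)]))) i) = (fun _ => 0).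
    by apply: funext => i; rewrite /= ffunE.
  exact: Jw0.
  have := heq S idfun wA; rewrite /phiX /= => /(_ _) h.
  have {h} : \sum_(i < k) sA i * wA (X i) = 0.
    apply: h; split.
      move=> x y; rewrite /wA -rmorphD; congr (pi I _).
      by rewrite sq_addE /= addr0; congr Sq; rewrite /GRing.add /= /nnadd /= addr0.
    move=> r x; rewrite /wA /fSA /= -rmorphM; congr (pi I _).
    rewrite sq_mulE /= mulr0 scaler0 addr0; congr Sq.
    rewrite /GRing.scale /= /nnscale /=; congr MkNN.
    by apply/ffunP => i; rewrite !ffunE scaler0 scale0r addr0.
  have -> : \sum_(i < k) sA i * wA (X i) =
     pi I (\sum_(i < k) sqN (A:=A1 R k) (nnp [ffun j => (i == j)%:R *: X i])).
    rewrite rmorph_sum; apply: eq_bigr => i _; rewrite /sA /wA -rmorphM; congr (pi I _).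
    rewrite sq_mulE /= mulr0 scaler0 addr0; congr Sq.
    rewrite /GRing.scale /= /nnscale /=; congr MkNN; first by rewrite scale0r.
    by apply/ffunP => j; rewrite !ffunE scaler0 add0r.
  move/pi0; rewrite -!raddf_sum sumdeltaM => [[_ [_ [_ h]]]].
  by move: h; congr Jw; apply: funext => i; rewrite /= ffunE.
Qed.
End StepA.

Section Dir2.
Variables (R : comUnitRingType) (M : lmodType R).
Hypothesis loc : local_ring R.

Lemma key_fin (sep : dual_dually_separated M) k (X : 'I_k -> M) :
  exists L, fgfree_summand L /\ forall i, L (X i).
Proof.
have [n [w [y [lw hX]]]] := stepA X sep.
have [n' [y' [hP hsp]]] := @reduce R M loc k X n w y lw hX.
have [v [e [lv [ve [sy _]]]]] := biortho hP.
exists (spn e); split; first exact: biortho_fgfree lv ve.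
move=> i; apply: (spn_min (spn_sub e) sy (hsp i)).
Qed.

Lemma dir2 (sep : dual_dually_separated M) : dirlim_fgfree_summands M.
Proof.
split.
  move=> L1 L2 [[_ [n1 [e1 [he1 _]]]] _] [[_ [n2 [e2 [he2 _]]]] _].
  pose X (i : 'I_(n1 + n2)) := match split i with inl a => e1 a | inr b => e2 b end.
  have [L [hL hX]] := key_fin sep X.
  have sL : submodule L by case: hL => [[]].
  exists L; split => //; split => x.
    case/he1 => c ->; apply: sub_sum => // a.
    by have := hX (lshift n2 a); rewrite /X (unsplitK (inl a)).
  case/he2 => c ->; apply: sub_sum => // a.
  by have := hX (rshift n1 a); rewrite /X (unsplitK (inr a)).
move=> x; have [L [hL hX]] := key_fin sep (fun _ : 'I_1 => x).
by exists L; split => //; apply: (hX ord0).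
Qed.
End Dir2.

Section FD.
Variables (R : comUnitRingType) (M : lmodType R) (S : comPzRingType)
  (fS : {rmorphism R -> S}) (T : comPzRingType) (g : {rmorphism S -> T}).

Definition Lin := {w : M -> T | islin (g \o fS) w}.
Definition fd (f : Lin -> T) := exists s : seq M, forall w w' : Lin,
  (forall m, m \in s -> sval w m = sval w' m) -> f w = f w'.
Record T0 := MkT0 { tf : Lin -> T; tp : fd tf }.
HB.instance Definition _ := gen_eqMixin T0.
HB.instance Definition _ := gen_choiceMixin T0.
Lemma T0_eq a b : tf a = tf b -> a = b.
Proof. case: a b => [f hf] [f' hf'] /= e; subst f'; congr MkT0; exact: Prop_irrelevance. Qed.

Lemma fd_const t : fd (fun _ => t). Proof. by exists [::]. Qed.
Lemma fd_op2 (op : T -> T -> T) f f' : fd f -> fd f' -> fd (fun w => op (f w) (f' w)).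
Proof.
case=> s hs [s' hs']; exists (s ++ s') => w w' h; congr op.
  by apply: hs => m hm; apply: h; rewrite mem_cat hm.
by apply: hs' => m hm; apply: h; rewrite mem_cat hm orbT.
Qed.
Lemma fd_op1 (op : T -> T) f : fd f -> fd (fun w => op (f w)).
Proof. by case=> s hs; exists s => w w' h; congr op; apply: hs. Qed.

Definition t0zero := MkT0 (fd_const 0).
Definition t0add a b := MkT0 (fd_op2 +%R (tp a) (tp b)).
Definition t0opp a := MkT0 (fd_op1 -%R (tp a)).
Definition t0mul a b := MkT0 (fd_op2 *%R (tp a) (tp b)).
Definition t0one := MkT0 (fd_const 1).

Lemma t0addA : associative t0add.
Proof. by move=> a b c; apply: T0_eq; apply: funext => w /=; rewrite addrA. Qed.
Lemma t0addC : commutative t0add.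
Proof. by move=> a b; apply: T0_eq; apply: funext => w /=; rewrite addrC. Qed.
Lemma t0add0 : left_id t0zero t0add.
Proof. by move=> a; apply: T0_eq; apply: funext => w /=; rewrite add0r. Qed.
Lemma t0addN : left_inverse t0zero t0opp t0add.
Proof. by move=> a; apply: T0_eq; apply: funext => w /=; rewrite addNr. Qed.
HB.instance Definition _ := GRing.isZmodule.Build T0 t0addA t0addC t0add0 t0addN.
Lemma t0mulA : associative t0mul.
Proof. by move=> a b c; apply: T0_eq; apply: funext => w /=; rewrite mulrA. Qed.
Lemma t0mulC : commutative t0mul.
Proof. by move=> a b; apply: T0_eq; apply: funext => w /=; rewrite mulrC. Qed.
Lemma t0mul1 : left_id t0one t0mul.
Proof. by move=> a; apply: T0_eq; apply: funext => w /=; rewrite mul1r. Qed.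
Lemma t0mulD : left_distributive t0mul t0add.
Proof. by move=> a b c; apply: T0_eq; apply: funext => w /=; rewrite mulrDl. Qed.
HB.instance Definition _ := GRing.Zmodule_isComPzRing.Build T0 t0mulA t0mulC t0mul1 t0mulD.

Definition g0 (s : S) : T0 := MkT0 (fd_const (g s)).
Lemma g0_zmod : zmod_morphism g0.
Proof. by move=> a b; apply: T0_eq; apply: funext => w /=; rewrite rmorphB. Qed.
HB.instance Definition _ := GRing.isZmodMorphism.Build S T0 g0 g0_zmod.
Lemma g0_mul : multiplicative g0.
Proof.
split; last by apply: T0_eq; apply: funext => w /=; rewrite rmorph1.
by move=> a b; apply: T0_eq; apply: funext => w /=; rewrite rmorphM.
Qed.
HB.instance Definition _ := GRing.isMultiplicative.Build S T0 g0 g0_mul.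

Definition ev (w : Lin) (f : T0) : T := tf f w.
Lemma ev_zmod w : zmod_morphism (ev w). Proof. by []. Qed.
HB.instance Definition _ w := GRing.isZmodMorphism.Build T0 T (ev w) (ev_zmod w).
Lemma ev_mul w : multiplicative (ev w). Proof. by []. Qed.
HB.instance Definition _ w := GRing.isMultiplicative.Build T0 T (ev w) (ev_mul w).

Lemma fd_eval m : fd (fun w : Lin => sval w m).
Proof. by exists [:: m] => w w' h; apply: h; rewrite inE. Qed.
Definition w0 (m : M) : T0 := MkT0 (fd_eval m).

Lemma w0_lin : islin (g0 \o fS) w0.
Proof.
split=> [x y|r x]; apply: T0_eq; apply: funext => -[w [hw1 hw2]] /=.
  exact: hw1.
exact: hw2.
Qed.

Lemma fin_support (phi : dual_family M S) : is_dual_nat fS phi ->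
  exists s : seq M, forall w w' : M -> T, islin (g \o fS) w -> islin (g \o fS) w' ->
    (forall m, m \in s -> w m = w' m) -> phi T g w = phi T g w'.
Proof.
case=> _ [_ hnat].
have key (w : M -> T) (hw : islin (g \o fS) w) :
    phi T g w = tf (phi T0 g0 w0) (exist _ w hw).
  have := hnat T0 T g0 g (ev (exist _ w hw)) w0 (fun s => erefl) w0_lin.
  by have -> : ev (exist _ w hw) \o w0 = w by apply: funext.
have [s hs] := tp (phi T0 g0 w0).
exists s => w w' hw hw' h; rewrite (key w hw) (key w' hw'); apply: hs => m hm /=.
exact: h.
Qed.
End FD.

Section Dir1.
Variables (R : comUnitRingType) (M : lmodType R).

Lemma fg_seq (hd : dirlim_fgfree_summands M) (s : seq M) :
  exists L, fgfree_summand L /\ forall m, m \in s -> L m.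
Proof.
case: hd => hdir hcov; elim: s => [|m s [L [hL hs]]].
  by have [L [hL _]] := hcov 0; exists L.
have [L1 [hL1 hm]] := hcov m.
have [L3 [hL3 [h13 h23]]] := hdir L1 L hL1 hL.
exists L3; split => // x; rewrite inE => /orP[/eqP ->|hx]; first exact: h13.
by apply: h23; apply: hs.
Qed.

Lemma coords (L : M -> Prop) : fgfree_summand L -> exists n (v : 'I_n -> M -> R) (e : 'I_n -> M),
  (forall i, lin (v i)) /\ forall m, L m -> m = \sum_(i < n) v i m *: e i.
Proof.
case=> [[sL [n [e [he hind]]]] [_ [L' [sL' [hcap hdec]]]]].
have hex m : exists c : 'I_n -> R, exists z, L' z /\ m = \sum_(i < n) c i *: e i + z.
  have [y [z [hy [hz ->]]]] := hdec m; have [c hc] := (he y).1 hy.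
  by exists c, z; rewrite -hc.
have uniq c c' z z' : L' z -> L' z' ->
    \sum_(i < n) c i *: e i + z = \sum_(i < n) c' i *: e i + z' -> forall i, c i = c' i.
  move=> hz hz' h.
  have h0 : \sum_(i < n) (c i - c' i) *: e i = z' - z.
    under eq_bigr do rewrite scalerBl.
    rewrite sumrB.
    have := congr1 (fun t => t - (\sum_(i < n) c' i *: e i + z)) h.
    by rewrite /= !opprD [LHS]addrACA [RHS]addrACA !subrr addr0 add0r.
  have : \sum_(i < n) (c i - c' i) *: e i = 0.
    apply: hcap; first by apply/he; eexists.
    rewrite h0; apply: sub_add => //; rewrite -scaleN1r; exact: sub_scale.
  by move/hind => hc i; apply/eqP; rewrite -subr_eq0 hc.
have [C hC] := choice hex.
exists n, (fun i m => C m i), e; split.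
  move=> i; split => [x y|r x].
    have [zx [hzx ex]] := hC x; have [zy [hzy ey]] := hC y.
    have [zxy [hzxy exy]] := hC (x + y).
    apply: (uniq _ (fun i => C x i + C y i) zxy (zx + zy) hzxy (sub_add sL' hzx hzy)).
    rewrite -exy {1}ex {1}ey; under [X in _ = X + _]eq_bigr do rewrite scalerDl.
    by rewrite big_split /= addrACA.
  have [zx [hzx ex]] := hC x; have [zrx [hzrx erx]] := hC (r *: x).
  apply: (uniq _ (fun i => r * C x i) zrx (r *: zx) hzrx (sub_scale r sL' hzx)).
  rewrite -erx {1}ex scalerDr scaler_sumr; congr (_ + _); apply: eq_bigr => j _.
  by rewrite scalerA.
move=> m hm; have [c hc] := (he m).1 hm; have [z [hz em]] := hC m.
have hsL'0 : L' 0 by case: sL'.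
have := uniq (C m) c z 0 hz hsL'0; rewrite -em addr0 -hc => /(_ erefl) e1.
by rewrite {1}hc; apply: eq_bigr => i _; rewrite e1.
Qed.

Section Nat.
Variables (S : comPzRingType) (fS : {rmorphism R -> S}) (T : comPzRingType) (g : {rmorphism S -> T}).

Lemma islin_app (w : M -> T) n (a : 'I_n -> R) (e : 'I_n -> M) : islin (g \o fS) w ->
  w (\sum_(i < n) a i *: e i) = \sum_(i < n) g (fS (a i)) * w (e i).
Proof.
case=> hadd hsc; elim: n a e => [|n IH] a e.
  rewrite !big_ord0; have h := hadd 0 0; rewrite addr0 in h.
  by apply: (@addrI _ (w 0)); rewrite -h addr0.
by rewrite !big_ord_recr /= hadd hsc IH.
Qed.

Variable (phi : dual_family M S).
Arguments phi : clear implicits.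
Hypothesis hphi : is_dual_nat fS phi.

Lemma phi_zero : phi T g (fun _ => 0) = 0.
Proof.
case: hphi => _ [hsc _].
have l0 : islin (g \o fS) (fun _ : M => (0 : T)) by split => *; rewrite ?addr0 ?mulr0.
have := hsc T g 0 _ l0; rewrite !mul0r; apply.
Qed.

Lemma islin_sumf n (F : 'I_n -> M -> T) : (forall i, islin (g \o fS) (F i)) ->
  islin (g \o fS) (fun m => \sum_(i < n) F i m).
Proof.
move=> hF; split=> [x y|r x].
  rewrite -big_split; apply: eq_bigr => i _; by case: (hF i) => ->.
rewrite mulr_sumr; apply: eq_bigr => i _; by case: (hF i) => _ ->.
Qed.

Lemma phi_sum n (F : 'I_n -> M -> T) : (forall i, islin (g \o fS) (F i)) ->
  phi T g (fun m => \sum_(i < n) F i m) = \sum_(i < n) phi T g (F i).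
Proof.
case: hphi => hadd _.
elim: n F => [|n IH] F hF.
  rewrite big_ord0; have -> : (fun m => \sum_(i < 0) F i m) = (fun _ => 0).
    by apply: funext => m; rewrite big_ord0.
  exact: phi_zero.
have -> : (fun m => \sum_(i < n.+1) F i m) =
    (fun m => (fun m' => \sum_(i < n) F (widen_ord (leqnSn n) i) m') m + F ord_max m).
  by apply: funext => m; rewrite big_ord_recr.
rewrite hadd ?IH ?big_ord_recr //; last exact: islin_sumf.
Qed.

Lemma phi_formula (w : M -> T) (hw : islin (g \o fS) w) n (v : 'I_n -> M -> R) (e : 'I_n -> M) :
  (forall i, lin (v i)) ->
  phi T g (fun m => w (\sum_(i < n) v i m *: e i)) =
  \sum_(i < n) w (e i) * g (phi S idfun (fS \o v i)).
Proof.
move=> lv; case: hphi => _ [hsc hnat].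
have lfv i : islin (g \o fS) (fun m => g (fS (v i m))).
  split=> [x y|r x] /=; first by rewrite (lin_add _ _ (lv i)) !rmorphD.
  by rewrite (lin_scale _ _ (lv i)) !rmorphM.
have -> : (fun m => w (\sum_(i < n) v i m *: e i)) =
    (fun m => \sum_(i < n) (fun m' => w (e i) * g (fS (v i m'))) m).
  by apply: funext => m; rewrite islin_app //; apply: eq_bigr => i _; rewrite mulrC.
rewrite phi_sum; last by move=> i; have := hsc; case: (lfv i) => h1 h2 _;
  split=> [x y|r x]; rewrite ?h1 ?h2 ?mulrDr // mulrCA.
apply: eq_bigr => i _; rewrite (hsc T g (w (e i)) _ (lfv i)); congr (_ * _).
have lfv' : islin (idfun \o fS) (fS \o v i).
  split=> [x y|r x] /=; first by rewrite (lin_add _ _ (lv i)) rmorphD.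
  by rewrite (lin_scale _ _ (lv i)) rmorphM.
exact: (hnat S T idfun g g (fS \o v i) (fun s => erefl) lfv').
Qed.
End Nat.

Lemma dir1 (hd : dirlim_fgfree_summands M) : dual_dually_separated M.
Proof.
move=> S fS phi psi hphi hpsi hagree T g w hw.
have [s1 hs1] := fin_support g hphi.
have [s2 hs2] := fin_support g hpsi.
have [L [hL hLs]] := fg_seq hd (s1 ++ s2).
have [n [v [e [lv hv]]]] := coords hL.
pose wp m := w (\sum_(i < n) v i m *: e i).
have hwp : islin (g \o fS) wp.
  split=> [x y|r x]; rewrite /wp; [rewrite -(proj1 hw) | rewrite -(proj2 hw)]; congr w.
    rewrite -big_split; apply: eq_bigr => i _; by rewrite (lin_add _ _ (lv i)) scalerDl.
  rewrite scaler_sumr; apply: eq_bigr => i _; by rewrite (lin_scale _ _ (lv i)) scalerA.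
have agree m : m \in s1 ++ s2 -> w m = wp m by move=> hm; rewrite /wp -hv //; apply: hLs.
rewrite (hs1 w wp hw hwp); last by move=> m hm; apply: agree; rewrite mem_cat hm.
rewrite (hs2 w wp hw hwp); last by move=> m hm; apply: agree; rewrite mem_cat hm orbT.
rewrite /wp (phi_formula hphi hw e lv) (phi_formula hpsi hw e lv).
by apply: eq_bigr => i _; rewrite (hagree (v i) (lv i)).
Qed.
End Dir1.


Theorem corollary6p19 (R : comUnitRingType) (M : lmodType R) :
  local_ring R ->
  (dual_dually_separated M <-> dirlim_fgfree_summands M).
Proof.
move=> loc; split; [exact: (dir2 loc) | exact: dir1].
Qed.
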